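(* Let $n\ge 4$ be even. Let $\mathcal V$ be a variety with ternary terms $t_0,\dots,t_n$ satisfying all the equations defining alvin terms except possibly the two equations $t_1(x,y,x)=x$ and $t_{n-1}(x,y,x)=x$. Then $\mathcal V$ is $(2n-3)$-reversed-modular. In particular every $n$-alvin variety is $(2n-3)$-reversed-modular.
   Context: Alvin terms: ternary terms $t_0,\dots,t_n$ with $t_0(x,y,z)=x$, $t_n(x,y,z)=z$, $t_h(x,y,x)=x$ for all $0\le h\le n$, $t_h(x,z,z)=t_{h+1}(x,z,z)$ for even $h$ and $t_h(x,x,z)=t_{h+1}(x,x,z)$ for odd $h$ ($0\le h<n$). A variety is $n$-alvin if it has alvin terms $t_0,\dots,t_n$. Reversed Day terms: $4$-ary terms $u_0,\dots,u_m$ with $u_k(x,y,y,x)=x$ for all $k$, $u_0(x,y,z,w)=x$, $u_m(x,y,z,w)=w$, $u_k(x,x,w,w)=u_{k+1}(x,x,w,w)$ for odd $k$ and $u_k(x,y,y,w)=u_{k+1}(x,y,y,w)$ for even $k$ ($0\le k<m$). A variety is $m$-reversed-modular if it has reversed Day terms $u_0,\dots,u_m$. *)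

(* Defs.v *)
From mathcomp Require Import all_boot.



Unset Printing Implicit Defensive.

Record signature := Signature {
  sym : Type;
  arity : sym -> nat
}.

Inductive term (sg : signature) (X : Type) : Type :=
| Var : X -> term sg X
| App : forall f : sym sg, ('I_(arity sg f) -> term sg X) -> term sg X.

Arguments Var {sg X} _.
Arguments App {sg X} f _.

Record algebra (sg : signature) := Algebra {
  carrier :> Type;
  interp : forall f : sym sg, ('I_(arity sg f) -> carrier) -> carrier
}.

Fixpoint eval (sg : signature) (A : algebra sg) (X : Type) (v : X -> A)
  (t : term sg X) : A :=
  match t with
  | Var x => v x
  | App f args => interp sg A f (fun i => eval sg A X v (args i))
  end.

(* A variety is the class of all models of a set of identities
   (identities are pairs of terms over countably many variables). *)
Record variety := Variety {
  vsig : signature;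
  vaxioms : term vsig nat * term vsig nat -> Prop
}.

Definition in_variety (V : variety) (A : algebra (vsig V)) : Prop :=
  forall e, vaxioms V e -> forall v : nat -> A, eval _ A nat v e.1 = eval _ A nat v e.2.

Definition op3 (sg : signature) (A : algebra sg) (t : term sg 'I_3)
  (x y z : A) : A :=
  eval sg A 'I_3 (fun i : 'I_3 => nth x [:: x; y; z] i) t.

Definition op4 (sg : signature) (A : algebra sg) (t : term sg 'I_4)
  (x y z w : A) : A :=
  eval sg A 'I_4 (fun i : 'I_4 => nth x [:: x; y; z; w] i) t.

Definition weak_alvin_terms (V : variety) (n : nat)
  (t : nat -> term (vsig V) 'I_3) : Prop :=
  forall A : algebra (vsig V), in_variety V A ->
  [/\ forall x y z : A, op3 _ A (t 0) x y z = x,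
      forall x y z : A, op3 _ A (t n) x y z = z,
      forall h, h <= n -> h != 1 -> h != n.-1 ->
        forall x y : A, op3 _ A (t h) x y x = x,
      forall h, h < n -> ~~ odd h ->
        forall x z : A, op3 _ A (t h) x z z = op3 _ A (t h.+1) x z z
    & forall h, h < n -> odd h ->
        forall x z : A, op3 _ A (t h) x x z = op3 _ A (t h.+1) x x z].

Definition alvin_terms (V : variety) (n : nat)
  (t : nat -> term (vsig V) 'I_3) : Prop :=
  forall A : algebra (vsig V), in_variety V A ->
  [/\ forall x y z : A, op3 _ A (t 0) x y z = x,
      forall x y z : A, op3 _ A (t n) x y z = z,
      forall h, h <= n -> forall x y : A, op3 _ A (t h) x y x = x,
      forall h, h < n -> ~~ odd h ->
        forall x z : A, op3 _ A (t h) x z z = op3 _ A (t h.+1) x z z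
    & forall h, h < n -> odd h ->
        forall x z : A, op3 _ A (t h) x x z = op3 _ A (t h.+1) x x z].

Definition n_alvin (V : variety) (n : nat) : Prop :=
  exists t : nat -> term (vsig V) 'I_3, alvin_terms V n t.

Definition reversed_day_terms (V : variety) (m : nat)
  (u : nat -> term (vsig V) 'I_4) : Prop :=
  forall A : algebra (vsig V), in_variety V A ->
  [/\ forall k, k <= m -> forall x y : A, op4 _ A (u k) x y y x = x,
      forall x y z w : A, op4 _ A (u 0) x y z w = x,
      forall x y z w : A, op4 _ A (u m) x y z w = w,
      forall k, k < m -> odd k ->
        forall x w : A, op4 _ A (u k) x x w w = op4 _ A (u k.+1) x x w w
    & forall k, k < m -> ~~ odd k ->
        forall x y w : A, op4 _ A (u k) x y y w = op4 _ A (u k.+1) x y y w].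

Definition reversed_modular (V : variety) (m : nat) : Prop :=
  exists u : nat -> term (vsig V) 'I_4, reversed_day_terms V m u.

(* Main.v *)
Require Import Defs.
From mathcomp Require Import all_boot.
From mathcomp Require Import zify.
From Stdlib Require Import FunctionalExtensionality.

Fixpoint rename (sg : signature) (X Y : Type) (f : X -> Y) (t : term sg X)
  : term sg Y :=
  match t with
  | Var x => Var (f x)
  | App g args => App g (fun i => rename sg X Y f (args i))
  end.

Lemma eval_rename sg (A : algebra sg) X Y (f : X -> Y) (v : Y -> A) t :
  eval sg A Y v (rename sg X Y f t) = eval sg A X (fun x => v (f x)) t.
Proof.
induction t as [x|g args IH]; first by [].
simpl; congr (interp _ _ _); apply: functional_extensionality => i; exact: IH.
Qed.

Definition o0 : 'I_4 := @Ordinal 4 0 isT.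
Definition o1 : 'I_4 := @Ordinal 4 1 isT.
Definition o2 : 'I_4 := @Ordinal 4 2 isT.
Definition o3 : 'I_4 := @Ordinal 4 3 isT.

Definition ren (a b c : 'I_4) (i : 'I_3) : 'I_4 := nth a [:: a; b; c] i.

Lemma op4_ren sg (A : algebra sg) a b c t (x y z w : A) :
  op4 sg A (rename sg _ _ (ren a b c) t) x y z w =
  op3 sg A t (nth x [:: x; y; z; w] a) (nth x [:: x; y; z; w] b)
    (nth x [:: x; y; z; w] c).
Proof.
rewrite /op4 /op3 eval_rename; congr (eval _ _ _ _ _).
apply: functional_extensionality => i.
by case: i => [[|[|[|i]]] Hi].
Qed.

Definition ufun sg (n : nat) (t : nat -> term sg 'I_3) (k : nat)
  : term sg 'I_4 :=
 if k == 0 then Var o0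
 else if k == 1 then rename sg _ _ (ren o0 o1 o2) (t 1)
 else if k == (2*n-4) then rename sg _ _ (ren o1 o2 o3) (t n.-1)
 else if 2*n-3 <= k then Var o3
 else if odd (k./2).+1 == odd k
      then rename sg _ _ (ren o0 o1 o3) (t (k./2).+1)
      else rename sg _ _ (ren o0 o2 o3) (t (k./2).+1).

Lemma op4_u sg (A : algebra sg) n t k (x y z w : A) :
  op4 sg A (ufun sg n t k) x y z w =
  if k == 0 then x
  else if k == 1 then op3 sg A (t 1) x y z
  else if k == (2*n-4) then op3 sg A (t n.-1) y z w
  else if 2*n-3 <= k then w
  else op3 sg A (t (k./2).+1) x (if odd (k./2).+1 == odd k then y else z) w.
Proof.
rewrite /ufun.
case: ifP => _; first by [].
case: ifP => _; first by rewrite op4_ren.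
case: ifP => _; first by rewrite op4_ren.
case: ifP => _; first by [].
by case: ifP => _; rewrite op4_ren.
Qed.

Theorem lemma4p2 (V : variety) (n : nat) (Hn : 4 <= n) (Hev : ~~ odd n) :
  (forall t : nat -> term (vsig V) 'I_3,
      weak_alvin_terms V n t -> reversed_modular V (2 * n - 3))
  /\ (n_alvin V n -> reversed_modular V (2 * n - 3)).
Proof.
have weak : forall t : nat -> term (vsig V) 'I_3,
      weak_alvin_terms V n t -> reversed_modular V (2 * n - 3).
  move=> t Ht; exists (ufun _ n t) => A HA.
  have [H0 HN H3 H4 H5] := Ht A HA.
  have Hn1 : forall a b : A, op3 _ A (t n.-1) a a b = b.
    move=> a b; rewrite H5; last by lia. by rewrite prednK ?HN //; lia. by lia.
  split.
  - move=> k Hk x y; rewrite op4_u.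
    case: (boolP (k == 0)) => [_|Hk0]; first by [].
    case: (boolP (k == 1)) => [_|Hk1]; first by rewrite -H4 ?H0 //; lia.
    have [_|Hk2] := eqVneq k (2 * n - 4); first by rewrite Hn1.
    case: ifP => [//|Hk3].
    by case: ifP => _; rewrite H3 //; lia.
  - by move=> x y z w; rewrite op4_u.
  - move=> x y z w; rewrite op4_u.
    have -> : (2 * n - 3 == 0) = false by lia.
    have -> : (2 * n - 3 == 1) = false by lia.
    have -> : (2 * n - 3 == 2 * n - 4) = false by lia.
    by rewrite leqnn.
  - move=> k Hk Hodd x w; rewrite !op4_u.
    have -> : (k == 0) = false by lia.
    have -> : (k.+1 == 0) = false by lia.
    have -> : (k.+1 == 1) = false by lia.
    have -> : (k == 2 * n - 4) = false by lia.
    have -> : (2 * n - 3 <= k) = false by lia.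
    have -> : (2 * n - 3 <= k.+1) = false by lia.
    case: (boolP (k == 1)) => [/eqP Ek1|Hk1].
      subst k; rewrite H5 //; last by lia.
      have -> : (2 == 2 * n - 4) = false by lia.
      by [].
    case: (boolP (k.+1 == (2 * n - 4))) => [/eqP Ek2|Hk2].
      have Eh : (k./2).+1 = n.-2 by lia.
      have Ep : (odd (k./2).+1 == odd k) = false by rewrite Eh; lia.
      rewrite Ep Eh H4; last by lia. by have -> : n.-2.+1 = n.-1 by lia. by lia.
    have Eh : (k.+1)./2.+1 = (k./2).+2 by lia.
    rewrite Eh.
    case Ep: (odd (k./2).+1).
      have E2 : (odd (k./2).+2 == odd k.+1) = true by rewrite oddS Ep oddS Hodd.
      rewrite Hodd eqxx E2 H5 //; lia.
    have E2 : (odd (k./2).+2 == odd k.+1) = false by rewrite oddS Ep oddS Hodd.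
    rewrite Hodd E2 /= H4 //; [lia | by rewrite Ep].
  - move=> k Hk Hev' x y w; rewrite !op4_u.
    have -> : (k.+1 == 0) = false by lia.
    case: (boolP (k == 0)) => [/eqP Ek0|Hk0]; first by subst k; rewrite /= -H4 ?H0 //; lia.
    have -> : (k.+1 == 1) = false by lia.
    have -> : (k == 1) = false by lia.
    case: (boolP (k == (2 * n - 4))) => [/eqP Ek|Hk2].
      have -> : (k.+1 == 2 * n - 4) = false by lia.
      by rewrite Hn1 ifT //; lia.
    have -> : (k.+1 == 2 * n - 4) = false by lia.
    have -> : (2 * n - 3 <= k) = false by lia.
    have -> : (2 * n - 3 <= k.+1) = false by lia.
    have -> : (k.+1)./2 = k./2 by lia.
    by case: ifP; case: ifP.
split; first exact: weak.
move=> [t Ht]; apply: (weak t) => A HA.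
have [H0 HN H3 H4 H5] := Ht A HA.
split=> // h Hh _ _; exact: H3.
Qed.
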